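(* Let $m\ge 1$ be an integer, $N=2m$, and let $x\in[-\pi/2,\pi/2]$. For $j=1,\ldots,2m$ define $\varphi_j=\left(\frac{N-(2j-1)}{N}\right)x$, so that $\varphi_j=-\varphi_{2m+1-j}$. For a function $g:\{1,\ldots,2m\}\to\{+1,-1\}$ satisfying the balanced condition $\sum_{j=1}^{2m} g(j)=0$, put $$\mathbf{S}(g)=\sum_{j=1}^{2m} g(j)\,e^{\imath\varphi_j}.$$ Then, over all such balanced $g$, the maximum of $|\mathbf{S}(g)|$ is attained at the two antisymmetric balanced functions $$g(j)=\begin{cases}1 & 1\le j\le m\\ -1 & m+1\le j\le 2m\end{cases}\qquad\text{and}\qquad g(j)=\begin{cases}-1 & 1\le j\le m\\ 1 & m+1\le j\le 2m.\end{cases}$$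
   Context: Here $\imath$ denotes the imaginary unit. Here $N$ is any even positive integer (not necessarily a power of 2). These two maximizing functions are called the antisymmetric balanced (ASB) functions; they correspond to the bit strings $0\cdots0\,1\cdots1$ and $1\cdots1\,0\cdots0$ (each block of length $m$). *)

(* Defs.v *)
From Stdlib Require Import Reals Lra.
From Coquelicot Require Import Coquelicot.
Open Scope R_scope.

Definition expi (t : R) : C := (cos t, sin t).

Definition phi (m : nat) (x : R) (j : nat) : R :=
  ((2 * INR m - (2 * INR j - 1)) / (2 * INR m)) * x.

(* g : {1..2m} -> {+1,-1}, represented as nat -> R constrained on 1..2m *)
Definition pm_one (m : nat) (g : nat -> R) : Prop :=
  forall j, (1 <= j <= 2 * m)%nat -> g j = 1 \/ g j = -1.

Definition balanced (m : nat) (g : nat -> R) : Prop :=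
  sum_n_m g 1 (2 * m) = 0.

Definition S (m : nat) (x : R) (g : nat -> R) : C :=
  sum_n_m (fun j => Cmult (RtoC (g j)) (expi (phi m x j))) 1 (2 * m).

Definition asb1 (m : nat) (j : nat) : R := if (j <=? m)%nat then 1 else -1.
Definition asb2 (m : nat) (j : nat) : R := if (j <=? m)%nat then -1 else 1.

(* Main.v *)
Require Import Defs.
From Stdlib Require Import Reals.
From Coquelicot Require Import Coquelicot.
From Stdlib Require Import Lra Lia.
Notation Sn := Datatypes.S.
Open Scope R_scope.

Fixpoint sm (h : nat -> R) (n : nat) : R :=
  match n with O => 0 | Datatypes.S k => sm h k + h k end.

Lemma sm_ext (f g : nat -> R) n :
  (forall i, (i < n)%nat -> f i = g i) -> sm f n = sm g n.
Proof.
  induction n; simpl; intros H; auto.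
  rewrite IHn; [rewrite H; auto|]. intros; apply H; lia.
Qed.

Lemma sm0 n : sm (fun _ => 0) n = 0.
Proof. induction n; simpl; lra. Qed.

Lemma sm_opp f n : sm (fun i => - f i) n = - sm f n.
Proof. induction n; simpl; lra. Qed.

Lemma sm_plus f g n : sm (fun i => f i + g i) n = sm f n + sm g n.
Proof. induction n; simpl; [lra| rewrite IHn; lra]. Qed.

Lemma sm_le f g n : (forall i, (i < n)%nat -> f i <= g i) -> sm f n <= sm g n.
Proof.
  induction n; simpl; intros H; [lra|].
  assert (sm f n <= sm g n) by (apply IHn; intros; apply H; lia).
  specialize (H n (Nat.lt_succ_diag_r n)). lra.
Qed.

Lemma sm_abs f n : Rabs (sm f n) <= sm (fun i => Rabs (f i)) n.
Proof.
  induction n; simpl. rewrite Rabs_R0; lra.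
  eapply Rle_trans. apply Rabs_triang. lra.
Qed.

Lemma sm_shift h n : sm h (Sn n) = h 0%nat + sm (fun i => h (Sn i)) n.
Proof. induction n. simpl; lra. change (sm h (Sn (Sn n))) with (sm h (Sn n) + h (Sn n)).
  rewrite IHn. simpl. lra. Qed.

Lemma sm_split h a b : sm h (a + b) = sm h a + sm (fun i => h (a + i)%nat) b.
Proof. induction b; simpl. rewrite Nat.add_0_r; lra.
  rewrite Nat.add_succ_r. simpl. rewrite IHb. lra. Qed.

Lemma sm_rev h n : sm h n = sm (fun i => h (n - 1 - i)%nat) n.
Proof.
  revert h; induction n; intros h; [reflexivity|].
  rewrite sm_shift. rewrite (IHn (fun i => h (Sn i))).
  change (sm (fun i => h (Sn n - 1 - i)%nat) (Sn n)) with
    (sm (fun i => h (Sn n - 1 - i)%nat) n + h (Sn n - 1 - n)%nat).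
  replace (Sn n - 1 - n)%nat with 0%nat by lia.
  rewrite (sm_ext (fun i => h (Sn (n - 1 - i))) (fun i => h (Sn n - 1 - i)%nat)).
  lra. intros; f_equal; lia.
Qed.

Lemma sum_sm (f : nat -> R) n : sum_n_m f 1 n = sm (fun i => f (Sn i)) n.
Proof.
  induction n. rewrite sum_n_m_zero; [reflexivity|lia].
  rewrite sum_n_Sm; [|lia]. rewrite IHn. reflexivity.
Qed.

Lemma pair_sum (f : nat -> R) m :
  sum_n_m f 1 (2 * m) = sm (fun i => f (Sn i) + f (2 * m - i)%nat) m.
Proof.
  rewrite sum_sm. replace (2 * m)%nat with (m + m)%nat by lia.
  rewrite sm_split, sm_rev with (h := fun i => f (Sn (m + i))), <- sm_plus.
  apply sm_ext; intros; f_equal; f_equal; lia.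
Qed.

Lemma sumC (f1 f2 : nat -> R) n :
  sum_n_m (fun j => ((f1 j, f2 j) : C)) 1 n = (sum_n_m f1 1 n, sum_n_m f2 1 n).
Proof.
  induction n. rewrite !sum_n_m_zero; try lia; reflexivity.
  rewrite !sum_n_Sm; try lia. rewrite IHn. reflexivity.
Qed.

Lemma S_eq m x g : S m x g =
  (sum_n_m (fun j => g j * cos (phi m x j)) 1 (2 * m),
   sum_n_m (fun j => g j * sin (phi m x j)) 1 (2 * m)).
Proof.
  unfold S. rewrite <- sumC. apply sum_n_m_ext. intros j.
  unfold expi, Cmult, RtoC. simpl. f_equal; ring.
Qed.

Lemma phi_refl m x i : (1 <= m)%nat -> (i < m)%nat ->
  phi m x (2 * m - i) = - phi m x (Sn i).
Proof.
  intros Hm Hi. unfold phi. rewrite minus_INR by lia. rewrite mult_INR, S_INR.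
  simpl (INR 2). assert (0 < INR m) by (apply lt_0_INR; lia).
  rewrite (S_INR i). simpl (INR 1). field. lra.
Qed.

Lemma phi_bound m x i : (1 <= m)%nat -> (i < m)%nat ->
  exists c, 0 <= c <= 1 /\ phi m x (Sn i) = c * x.
Proof.
  intros Hm Hi. unfold phi. rewrite S_INR.
  assert (0 < INR m) by (apply lt_0_INR; lia).
  assert (INR i + 1 <= INR m) by (rewrite <- S_INR; apply le_INR; lia).
  assert (0 <= INR i) by apply pos_INR.
  exists ((2 * INR m - (2 * (INR i + 1) - 1)) / (2 * INR m)). split; [|reflexivity].
  split. apply Rdiv_le_0_compat; lra.
  apply Rmult_le_reg_r with (2 * INR m); [lra|].
  unfold Rdiv; rewrite Rmult_assoc, Rinv_l by lra. lra.
Qed.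

Lemma one_minus_cos a : - (PI/2) <= a <= PI/2 -> 1 - cos a <= Rabs (sin a).
Proof.
  intros H. assert (0 <= cos a) by (apply cos_ge_0; lra).
  assert (cos a <= 1) by apply COS_bound.
  pose proof (sin2_cos2 a). unfold Rsqr in *.
  destruct (Rcase_abs (sin a)); [rewrite Rabs_left by lra | rewrite Rabs_right by lra];
  nra.
Qed.

Lemma Cmod_le a b c : Rabs a + Rabs b <= Rabs c -> Cmod (a, b) <= Cmod (0, c).
Proof.
  intros H. unfold Cmod; simpl. apply sqrt_le_1_alt.
  pose proof (Rabs_pos a); pose proof (Rabs_pos b).
  assert (Ea : a * a = Rabs a * Rabs a) by (rewrite <- Rabs_mult; symmetry; apply Rabs_right; nra).
  assert (Eb : b * b = Rabs b * Rabs b) by (rewrite <- Rabs_mult; symmetry; apply Rabs_right; nra).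
  assert (Ec : c * c = Rabs c * Rabs c) by (rewrite <- Rabs_mult; symmetry; apply Rabs_right; nra).
  simpl. nra.
Qed.

Lemma term_bound a b c s : (a = 1 \/ a = -1) -> (b = 1 \/ b = -1) ->
  1 - c <= Rabs s -> c <= 1 ->
  Rabs ((a + b) * (c - 1)) + Rabs ((a - b) * s) <= 2 * Rabs s.
Proof.
  intros Ha Hb H1 H2. rewrite !Rabs_mult.
  rewrite (Rabs_left1 (c - 1)) by lra.
  assert (Rabs (a + b) + Rabs (a - b) = 2).
  { destruct Ha as [-> | ->], Hb as [-> | ->];
    [ rewrite (Rabs_right (1+1)), (Rabs_right (1-1)) by lra
    | rewrite (Rabs_right (1+ -1)), (Rabs_right (1- -1)) by lra
    | rewrite (Rabs_right (-1+1)), (Rabs_left1 (-1-1)) by lra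
    | rewrite (Rabs_left1 (-1+ -1)), (Rabs_right (-1- -1)) by lra]; lra. }
  pose proof (Rabs_pos (a + b)); pose proof (Rabs_pos (a - b)). nra.
Qed.

Theorem theorem1 (m : nat) (x : R) :
  (1 <= m)%nat -> - (PI / 2) <= x <= PI / 2 ->
  pm_one m (asb1 m) /\ balanced m (asb1 m) /\
  pm_one m (asb2 m) /\ balanced m (asb2 m) /\
  (forall g : nat -> R, pm_one m g -> balanced m g ->
     Cmod (S m x g) <= Cmod (S m x (asb1 m)) /\
     Cmod (S m x g) <= Cmod (S m x (asb2 m))).
Proof.
  intros Hm Hx.
  assert (Hl : forall i, (i < m)%nat -> (Sn i <=? m)%nat = true) by
    (intros; apply Nat.leb_le; lia).
  assert (Hr : forall i, (i < m)%nat -> (2 * m - i <=? m)%nat = false) by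
    (intros; apply Nat.leb_gt; lia).
  assert (Hpm : forall g : nat -> R, (forall j, g j = 1 \/ g j = -1) -> pm_one m g)
    by (intros g Hg j _; apply Hg).
  assert (Hal : forall i, (i < m)%nat -> - (PI/2) <= phi m x (Sn i) <= PI/2).
  { intros i Hi. destruct (phi_bound m x i Hm Hi) as [c [Hc ->]]. split; nra. }
  assert (HRe : forall g, sum_n_m (fun j => g j * cos (phi m x j)) 1 (2 * m) =
     sm (fun i => (g (Sn i) + g (2*m - i)%nat) * cos (phi m x (Sn i))) m).
  { intros g. rewrite pair_sum. apply sm_ext. intros i Hi.
    rewrite phi_refl, cos_neg by auto. ring. }
  assert (HIm : forall g, sum_n_m (fun j => g j * sin (phi m x j)) 1 (2 * m) =
     sm (fun i => (g (Sn i) - g (2*m - i)%nat) * sin (phi m x (Sn i))) m).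
  { intros g. rewrite pair_sum. apply sm_ext. intros i Hi.
    rewrite phi_refl, sin_neg by auto. ring. }
  set (T := sm (fun i => 2 * sin (phi m x (Sn i))) m).
  assert (HT : sm (fun i => 2 * Rabs (sin (phi m x (Sn i)))) m <= Rabs T).
  { destruct (Rle_dec 0 x).
    - unfold T. rewrite Rabs_right.
      2:{ apply Rle_ge. rewrite <- (sm0 m). apply sm_le. intros i Hi.
          destruct (phi_bound m x i Hm Hi) as [c [Hc Hp]]. rewrite Hp.
          assert (0 <= sin (c * x)) by (apply sin_ge_0; nra). lra. }
      apply sm_le. intros i Hi.
      destruct (phi_bound m x i Hm Hi) as [c [Hc Hp]]. rewrite Hp.
      assert (0 <= sin (c * x)) by (apply sin_ge_0; nra).
      rewrite Rabs_right; lra.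
    - assert (E : T = - sm (fun i => 2 * Rabs (sin (phi m x (Sn i)))) m).
      { unfold T. replace (- sm _ m) with
          (sm (fun i => - (2 * Rabs (sin (phi m x (Sn i))))) m).
        2:{ apply sm_opp. }
        apply sm_ext. intros i Hi.
        destruct (phi_bound m x i Hm Hi) as [c [Hc Hp]]. rewrite Hp.
        assert (sin (c * x) <= 0).
        { rewrite <- (Ropp_involutive (c * x)), sin_neg.
          assert (0 <= sin (- (c * x))) by (apply sin_ge_0; nra). lra. }
        rewrite Rabs_left1; lra. }
      rewrite E, Rabs_Ropp. apply Rle_abs. }
  assert (HS1 : S m x (asb1 m) = (0, T)).
  { rewrite S_eq, HRe, HIm. f_equal.
    - transitivity (sm (fun _ => 0) m). apply sm_ext. intros i Hi.
      unfold asb1. rewrite Hl, Hr by auto. ring. apply sm0.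
    - apply sm_ext. intros i Hi. unfold asb1. rewrite Hl, Hr by auto. ring. }
  assert (HS2 : S m x (asb2 m) = (0, - T)).
  { rewrite S_eq, HRe, HIm. f_equal.
    - transitivity (sm (fun _ => 0) m). apply sm_ext. intros i Hi.
      unfold asb2. rewrite Hl, Hr by auto. ring. apply sm0.
    - unfold T. replace (- sm _ m) with
          (sm (fun i => - (2 * sin (phi m x (Sn i)))) m).
      2:{ apply sm_opp. }
      apply sm_ext. intros i Hi. unfold asb2. rewrite Hl, Hr by auto. ring. }
  assert (Hbal : forall g : nat -> R, (forall i, (i < m)%nat -> g (Sn i) + g (2*m-i)%nat = 0)
     -> balanced m g).
  { intros g H. unfold balanced. rewrite pair_sum.
    transitivity (sm (fun _ => 0) m). apply sm_ext; auto. apply sm0. }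
  split; [apply Hpm; intros; unfold asb1; destruct (_ <=? _)%nat; auto|].
  split; [apply Hbal; intros; unfold asb1; rewrite Hl, Hr by auto; ring|].
  split; [apply Hpm; intros; unfold asb2; destruct (_ <=? _)%nat; auto|].
  split; [apply Hbal; intros; unfold asb2; rewrite Hl, Hr by auto; ring|].
  intros g Hg Hb.
  assert (Hmain : Cmod (S m x g) <= Cmod (0, T)).
  { rewrite S_eq, HRe, HIm. apply Cmod_le.
    unfold balanced in Hb. rewrite pair_sum in Hb.
    rewrite (sm_ext _ (fun i => (g (Sn i) + g (2 * m - i)%nat) * (cos (phi m x (Sn i)) - 1)
       + (g (Sn i) + g (2 * m - i)%nat))).
    2:{ intros; ring. }
    rewrite sm_plus, Hb, Rplus_0_r.
    eapply Rle_trans; [apply Rplus_le_compat; apply sm_abs|].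
    rewrite <- sm_plus. eapply Rle_trans; [|apply HT]. apply sm_le. intros i Hi.
    pose proof (one_minus_cos _ (Hal i Hi)).
    pose proof (Rabs_pos (sin (phi m x (Sn i)))).
    assert (0 <= cos (phi m x (Sn i))) by (apply cos_ge_0; apply Hal; auto).
    destruct (Hg (Sn i)) as [E1|E1]; [lia| |];
    (destruct (Hg (2*m-i)%nat) as [E2|E2]; [lia| |]);
    rewrite E1, E2; apply term_bound; auto; pose proof (COS_bound (phi m x (Sn i))); lra. }
  rewrite HS1, HS2. split; auto.
  eapply Rle_trans; [apply Hmain|]. unfold Cmod; simpl. right; f_equal; ring.
Qed.
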